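(* Let $G$ be a second countable, locally compact, Hausdorff étale groupoid and let $\rho\colon G\to G/\mathrm{Iso}(G)$ be the quotient map. The following are equivalent: (1) $\mathrm{Iso}(G)$ is open in $G$; (2) $u\mapsto G(u)$ is continuous; (3) $(G/\mathrm{Iso}(G))^{(0)}$ is open in $G/\mathrm{Iso}(G)$; (4) $\rho$ is open. If these equivalent conditions hold, then $G/\mathrm{Iso}(G)$ is an étale groupoid.
   Context: Étale: range and source maps are local homeomorphisms (counting measure Haar system). $G(u)=\{\gamma: r(\gamma)=s(\gamma)=u\}$, $\mathrm{Iso}(G)=\bigcup_u G(u)$. Continuity of $u\mapsto G(u)$ is with respect to the Fell topology on the closed subsets of $G$. $G/\mathrm{Iso}(G)$ is the orbit space of the free proper right action of $\mathrm{Iso}(G)$ on $G$, with the quotient topology and the groupoid structure making $\rho$ a homomorphism. *)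

(* Defs.v *)
From HB Require Import structures.
From mathcomp Require Import all_boot all_order all_algebra.
From mathcomp Require Import all_classical all_reals all_analysis.
Set Implicit Arguments. Unset Strict Implicit. Unset Printing Implicit Defensive.
Local Open Scope classical_set_scope.
Local Open Scope quotient_scope.

Record groupoid (G : Type) := Groupoid {
  gunit : set G;
  grng : G -> G;
  gsrc : G -> G;
  gmul : G -> G -> G;
  ginv : G -> G;
  rng_unit : forall g, gunit (grng g);
  src_unit : forall g, gunit (gsrc g);
  unit_rng : forall u, gunit u -> grng u = u;
  unit_src : forall u, gunit u -> gsrc u = u;
  rng_mul : forall g h, gsrc g = grng h -> grng (gmul g h) = grng g;
  src_mul : forall g h, gsrc g = grng h -> gsrc (gmul g h) = gsrc h;
  mulA : forall g h k, gsrc g = grng h -> gsrc h = grng k ->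
    gmul (gmul g h) k = gmul g (gmul h k);
  mul_rng : forall g, gmul (grng g) g = g;
  mul_src : forall g, gmul g (gsrc g) = g;
  rng_inv : forall g, grng (ginv g) = gsrc g;
  src_inv : forall g, gsrc (ginv g) = grng g;
  mulgV : forall g, gmul g (ginv g) = grng g;
  mulVg : forall g, gmul (ginv g) g = gsrc g
}.

Section Defs.
Context {G : topologicalType} (Gr : groupoid G).

Definition composable : set (G * G) :=
  [set p | gsrc Gr p.1 = grng Gr p.2].

Definition rel_open (A B : set G) := exists V : set G, open V /\ B = V `&` A.

Definition local_homeo_onto (X : set G) (f : G -> G) :=
  (forall g, X (f g)) /\
  forall g, exists U : set G,
    [/\ open U, U g, {in U &, injective f}, {within U, continuous f} &
        forall V, open V -> V `<=` U -> rel_open X (f @` V)].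

Definition topological_groupoid :=
  {within composable, continuous (fun p : G * G => gmul Gr p.1 p.2)} /\
  continuous (ginv Gr).

Definition etale_groupoid :=
  topological_groupoid /\
  local_homeo_onto (gunit Gr) (grng Gr) /\ local_homeo_onto (gunit Gr) (gsrc Gr).

Definition Iso : set G := [set g | grng Gr g = gsrc Gr g].
Definition isotropy (u : G) : set G := [set g | grng Gr g = u /\ gsrc Gr g = u].

(* continuity of u |-> G(u) from G^(0) to the closed subsets of G with the Fell
   topology: preimages of the subbasic Fell-open sets
   {C | C ∩ K = ∅} (K compact) and {C | C ∩ U ≠ ∅} (U open) are open in G^(0). *)
Definition isotropy_fell_continuous :=
  (forall K : set G, compact K ->
     rel_open (gunit Gr) [set u | gunit Gr u /\ isotropy u `&` K = set0]) /\
  (forall U : set G, open U ->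
     rel_open (gunit Gr) [set u | gunit Gr u /\ isotropy u `&` U !=set0]).

(* orbit relation of the right action of Iso(G) on G:
   g ~ h  iff  h = g a for some a in Iso(G) with s g = r a,
   which is equivalent to r g = r h /\ s g = s h. *)
Definition iso_orbit_rel (g h : G) : bool :=
  `[< exists a, [/\ Iso a, gsrc Gr g = grng Gr a & h = gmul Gr g a] >].

Lemma iso_orbit_relE g h :
  iso_orbit_rel g h <-> (grng Gr g = grng Gr h /\ gsrc Gr g = gsrc Gr h).
Proof.
rewrite /iso_orbit_rel; split.
  move/asboolP=> [a [Ia sga ->]]; rewrite rng_mul // src_mul //.
  by split => //; rewrite sga.
move=> [rr ss]; apply/asboolP; exists (gmul Gr (ginv Gr g) h).
have c : gsrc Gr (ginv Gr g) = grng Gr h by rewrite src_inv.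
split.
- by rewrite /Iso /= rng_mul // src_mul // rng_inv.
- by rewrite rng_mul // rng_inv.
- rewrite -mulA ?rng_inv // mulgV rr mul_rng //.
Qed.

Lemma iso_orbit_refl : reflexive iso_orbit_rel.
Proof. by move=> x; apply/iso_orbit_relE. Qed.
Lemma iso_orbit_sym : symmetric iso_orbit_rel.
Proof.
by move=> x y; apply/idP/idP => /iso_orbit_relE [r1 s1]; apply/iso_orbit_relE.
Qed.
Lemma iso_orbit_trans : transitive iso_orbit_rel.
Proof.
move=> y x z /iso_orbit_relE [r1 s1] /iso_orbit_relE [r2 s2].
by apply/iso_orbit_relE; split; congruence.
Qed.

Definition iso_orbit_equiv_rel : equiv_rel G := EquivRel iso_orbit_rel iso_orbit_refl iso_orbit_sym iso_orbit_trans.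

Definition orbit_space := quotient_topology {eq_quot iso_orbit_equiv_rel}.

Definition rho : G -> orbit_space := \pi_orbit_space.

End Defs.

Definition groupoid_hom {G Q : Type} (Gr : groupoid G) (H : groupoid Q) (f : G -> Q) :=
  [/\ gunit H = f @` gunit Gr,
      forall g, grng H (f g) = f (grng Gr g),
      forall g, gsrc H (f g) = f (gsrc Gr g),
      forall g h, gsrc Gr g = grng Gr h -> f (gmul Gr g h) = gmul H (f g) (f h) &
      forall g, f (ginv Gr g) = ginv H (f g)].

Definition open_map {X Y : topologicalType} (f : X -> Y) :=
  forall U : set X, open U -> open (f @` U).

(* Main.v *)
Require Import Defs.
From HB Require Import structures.
From mathcomp Require Import all_boot all_order all_algebra.
From mathcomp Require Import all_classical all_reals all_analysis.
Local Open Scope classical_set_scope.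

Section S.
Context (G : topologicalType) (Gr : groupoid G).
Local Notation r := (grng Gr).
Local Notation s := (gsrc Gr).
Local Notation U0 := (gunit Gr).
Local Notation mul := (gmul Gr).

Lemma lh_cont (f : G -> G) : local_homeo_onto U0 f -> continuous f.
Proof.
move=> [_ lh] g; have [U [oU Ug _ cU _]] := lh g.
by move: cU; rewrite continuous_open_subspace // => /(_ g); apply; rewrite inE.
Qed.

Lemma cont_nbhs (f : G -> G) (g : G) (B : set G) :
  continuous f -> nbhs (f g) B -> nbhs g (f @^-1` B).
Proof. by move=> cf nB; apply: cf. Qed.

Lemma unit_open : local_homeo_onto U0 r -> open U0.
Proof.
move=> hr; have cr := lh_cont _ hr; case: hr => _ lh.
rewrite openE => u Uu; rewrite /interior.
have [U [oU Uu' inj _ _]] := lh u.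
have nU : nbhs u U by apply: open_nbhs_nbhs; split.
have nU2 : nbhs u (r @^-1` U).
  by apply: cont_nbhs => //; rewrite unit_rng.
apply: filterS (filterI nU nU2) => g [Ug Urg].
have e : r g = g.
  apply: inj; rewrite ?inE //.
  by rewrite unit_rng //; apply: rng_unit.
by rewrite -e; apply: rng_unit.
Qed.

Lemma rhoE (g h : G) : rho Gr g = rho Gr h <-> (r g = r h /\ s g = s h).
Proof.
split; first by move/eqquotP => /iso_orbit_relE.
by move=> H; apply/eqquotP; apply/iso_orbit_relE.
Qed.

Lemma rho_surj (x : orbit_space Gr) : exists g, rho Gr g = x.
Proof. by exists (repr x); rewrite /rho reprK. Qed.

Lemma rho_repr (x : orbit_space Gr) : rho Gr (repr x) = x.
Proof. by rewrite /rho reprK. Qed.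

Lemma Iso_closed : hausdorff_space G -> continuous r -> continuous s -> closed (Iso Gr).
Proof.
move=> hG cr cs g cg; apply: hG => A B nA nB.
have nAB : nbhs g (r @^-1` A `&` s @^-1` B).
  by apply: filterI; apply: cont_nbhs.
have [k [Ik [Ak Bk]]] := cg _ nAB.
by exists (r k); split => //; rewrite Ik.
Qed.

Lemma pre_units : rho Gr @^-1` (rho Gr @` U0) = Iso Gr.
Proof.
apply/seteqP; split => g /=.
  case=> u Uu /rhoE [ru su].
  by rewrite /Iso /= -ru -su unit_rng // unit_src.
move=> Ig; exists (r g); first exact: rng_unit.
apply/rhoE; have Ur := rng_unit Gr g.
by rewrite unit_rng // unit_src.
Qed.

Lemma iso_open_units : open (Iso Gr) <-> open (rho Gr @` U0).
Proof.
have -> : open (rho Gr @` U0) = open (rho Gr @^-1` (rho Gr @` U0)) by [].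
by rewrite pre_units.
Qed.

Lemma mul_near (g h : G) (U : set G) : topological_groupoid Gr ->
  s g = r h -> open U -> U (mul g h) ->
  exists P Q, [/\ nbhs g P, nbhs h Q &
    forall g' h', P g' -> Q h' -> s g' = r h' -> U (mul g' h')].
Proof.
move=> [cm _] c oU Ugh.
have := (subspace_continuousP _ _).1 cm (g, h) c U.
move=> /(_ (open_nbhs_nbhs _)) [].
  by split.
move=> [P Q] /= [nP nQ] sub; exists P, Q; split => // g' h' Pg Qh c'.
exact: (sub (g', h')).
Qed.

Lemma iso_open_rho_open : topological_groupoid Gr -> local_homeo_onto U0 r ->
  local_homeo_onto U0 s -> open (Iso Gr) -> open_map (rho Gr).
Proof.
move=> tg hr hs oI U oU.
have cs := lh_cont _ hs.
change (open (rho Gr @^-1` (rho Gr @` U))).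
rewrite openE => h [g Ug /rhoE [rgh sgh]]; rewrite /interior.
pose b := mul (ginv Gr h) g.
have c1 : s (ginv Gr h) = r g by rewrite src_inv.
have rb : r b = s h by rewrite rng_mul // rng_inv.
have sb : s b = s h by rewrite src_mul // sgh.
have hb : mul h b = g.
  by rewrite -Defs.mulA ?rng_inv // Defs.mulgV -rgh mul_rng.
have Ib : Iso Gr b by rewrite /Iso /= rb sb.
have [P [Q [nP nQ PQ]]] := mul_near h b U tg (esym rb) oU (ltac:(by rewrite hb)).
case: hr => _ /(_ b) [Ub [oUb Ubb _ _ ob]].
pose C := Q° `&` Iso Gr `&` Ub.
have oC : open C by apply: openI => //; apply: openI => //; exact: open_interior.
have Cb : C b.
  split => //; split => //; exact: nbhs_interior.
have [W [oW eW]] := ob C oC (fun x => @proj2 _ _).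
have Wsh : W (s h).
  have : (r @` C) (r b) by exists b.
  by rewrite eW rb => -[].
have nW : nbhs h (s @^-1` W) by apply: cont_nbhs => //; apply: open_nbhs_nbhs.
apply: filterS (filterI nP nW) => h' [Ph' Wh'].
have : (r @` C) (s h') by rewrite eW; split => //; exact: src_unit.
case=> b' [[Qb' Ib'] Ub'] rb'.
exists (mul h' b'); first by apply: PQ => //; first exact: interior_subset.

apply/rhoE; rewrite rng_mul ?rb' // src_mul ?rb' //.
by split => //; rewrite -Ib'.
Qed.

Lemma fell_iso_open : local_homeo_onto U0 r -> isotropy_fell_continuous Gr ->
  open (Iso Gr).
Proof.
move=> hr [_ low]; have cr := lh_cont _ hr; case: hr => _ lh.
rewrite openE => a Ia; rewrite /interior.
have [Ua [oUa Uaa inj _ _]] := lh a.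
have [V [oV eV]] := low Ua oUa.
have Vra : V (r a).
  have : [set u | U0 u /\ isotropy Gr u `&` Ua !=set0] (r a).
    split; first exact: rng_unit.
    by exists a; split => //; split => //; rewrite Ia.
  by rewrite eV => -[].
have nV : nbhs a (r @^-1` V) by apply: cont_nbhs => //; apply: open_nbhs_nbhs.
have nU : nbhs a Ua by apply: open_nbhs_nbhs.
apply: filterS (filterI nU nV) => g [Ug Vg].
have : [set u | U0 u /\ isotropy Gr u `&` Ua !=set0] (r g).
  by rewrite eV; split => //; exact: rng_unit.
case=> _ [c [[rc sc] Uc]].
have e : c = g by apply: inj; rewrite ?inE.
by rewrite /Iso /= -e rc sc.
Qed.

Lemma iso_open_fell : hausdorff_space G -> local_homeo_onto U0 r ->
  local_homeo_onto U0 s -> open (Iso Gr) -> isotropy_fell_continuous Gr.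
Proof.
move=> hG hr hs oI.
have cr := lh_cont _ hr; have cs := lh_cont _ hs; have oU0 := unit_open hr.
split.
  move=> K cK.
  exists (~` (r @` (K `&` Iso Gr))); split.
    rewrite openC; apply: compact_closed => //.
    apply: continuous_compact; first exact: continuous_subspaceT.
    by apply: compact_closedI => //; exact: Iso_closed.
  apply/seteqP; split => u /=.
    case=> Uu e; split => //; case=> g [Kg Ig] rg.
    have : (isotropy Gr u `&` K) g by split => //; split => //; rewrite -Ig.
    by rewrite e.
  case=> nK Uu; split => //; apply/seteqP; split => // g [[rg sg] Kg].
  by apply: nK; exists g => //; split => //; rewrite /Iso /= rg sg.
move=> U oU.
exists (r @` (Iso Gr `&` U)); split.
  rewrite openE => u [g [Ig Ug] <-]; rewrite /interior.
  case: hr => _ /(_ g) [Ug' [oUg Ugg _ _ og]].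
  pose C := Iso Gr `&` U `&` Ug'.
  have oC : open C by do 2 apply: openI => //.
  have [W [oW eW]] := og C oC (fun x => @proj2 _ _).
  have oWU : open (W `&` U0) by exact: openI.
  have : (W `&` U0) (r g) by rewrite -eW; exists g.
  move=> Wg; have nW : nbhs (r g) (W `&` U0) by apply: open_nbhs_nbhs.
  apply: filterS nW; rewrite -eW => v [k [[Ik Uk] _] <-].
  by exists k.
apply/seteqP; split => u /=.
  case=> Uu [c [[rc sc] Uc]]; split => //.
  by exists c => //; split => //; rewrite /Iso /= rc sc.
case=> [[g [Ig Ug] <-] Uu]; split => //.
by exists g; split => //; split => //; rewrite Ig.
Qed.

Local Notation Q := (orbit_space Gr).
Local Notation rh := (rho Gr).

Definition qR (x : Q) := r (repr x).
Definition qS (x : Q) := s (repr x).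
Definition qunit : set Q := rh @` U0.
Definition qrng (x : Q) : Q := rh (r (repr x)).
Definition qsrc (x : Q) : Q := rh (s (repr x)).
Definition qinv (x : Q) : Q := rh (ginv Gr (repr x)).
Definition qmul (x y : Q) : Q :=
  if s (repr x) == r (repr y) then rh (mul (repr x) (repr y)) else x.

Lemma rR g : r (repr (rh g)) = r g.
Proof. by have /rhoE [] := rho_repr (rh g). Qed.
Lemma sR g : s (repr (rh g)) = s g.
Proof. by have /rhoE [] := rho_repr (rh g). Qed.

Lemma eqQ (x y : Q) : qR x = qR y -> qS x = qS y -> x = y.
Proof. by move=> e1 e2; rewrite -(rho_repr x) -(rho_repr y); apply/rhoE. Qed.

Lemma ru g : r (r g) = r g. Proof. by rewrite unit_rng //; exact: rng_unit. Qed.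
Lemma su g : s (r g) = r g. Proof. by rewrite unit_src //; exact: rng_unit. Qed.
Lemma ru' g : r (s g) = s g. Proof. by rewrite unit_rng //; exact: src_unit. Qed.
Lemma su' g : s (s g) = s g. Proof. by rewrite unit_src //; exact: src_unit. Qed.

Lemma qR_rng x : qR (qrng x) = qR x. Proof. by rewrite /qR /qrng rR ru. Qed.
Lemma qS_rng x : qS (qrng x) = qR x. Proof. by rewrite /qS /qR /qrng sR su. Qed.
Lemma qR_src x : qR (qsrc x) = qS x. Proof. by rewrite /qR /qS /qsrc rR ru'. Qed.
Lemma qS_src x : qS (qsrc x) = qS x. Proof. by rewrite /qS /qsrc sR su'. Qed.
Lemma qR_inv x : qR (qinv x) = qS x. Proof. by rewrite /qR /qS /qinv rR rng_inv. Qed.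
Lemma qS_inv x : qS (qinv x) = qR x. Proof. by rewrite /qR /qS /qinv sR src_inv. Qed.
Lemma qR_mul x y : qS x = qR y -> qR (qmul x y) = qR x.
Proof. by rewrite /qR /qS /qmul => e; rewrite e eqxx rR rng_mul. Qed.
Lemma qS_mul x y : qS x = qR y -> qS (qmul x y) = qS y.
Proof. by rewrite /qR /qS /qmul => e; rewrite e eqxx sR src_mul. Qed.
Lemma qR_rho g : qR (rh g) = r g. Proof. exact: rR. Qed.
Lemma qS_rho g : qS (rh g) = s g. Proof. exact: sR. Qed.

Lemma qcomp x y : qsrc x = qrng y -> qS x = qR y.
Proof. by move=> e; rewrite -qR_src e qR_rng. Qed.

Lemma qunitP u : qunit u -> qR u = qS u.
Proof. by case=> v Uv <-; rewrite qR_rho qS_rho unit_rng // unit_src. Qed.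

Lemma q_rng_unit x : qunit (qrng x). Proof. by exists (r (repr x)) => //; exact: rng_unit. Qed.
Lemma q_src_unit x : qunit (qsrc x). Proof. by exists (s (repr x)) => //; exact: src_unit. Qed.
Lemma q_unit_rng u : qunit u -> qrng u = u.
Proof. by move=> /qunitP e; apply: eqQ; rewrite ?qR_rng ?qS_rng. Qed.
Lemma q_unit_src u : qunit u -> qsrc u = u.
Proof. by move=> /qunitP e; apply: eqQ; rewrite ?qR_src ?qS_src. Qed.
Lemma q_rng_mul x y : qsrc x = qrng y -> qrng (qmul x y) = qrng x.
Proof. by move=> /qcomp e; apply: eqQ; rewrite ?qR_rng ?qS_rng qR_mul. Qed.
Lemma q_src_mul x y : qsrc x = qrng y -> qsrc (qmul x y) = qsrc y.
Proof. by move=> /qcomp e; apply: eqQ; rewrite ?qR_src ?qS_src qS_mul. Qed.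
Lemma q_mulA x y z : qsrc x = qrng y -> qsrc y = qrng z ->
  qmul (qmul x y) z = qmul x (qmul y z).
Proof.
move=> /qcomp e1 /qcomp e2.
have c1 : qS (qmul x y) = qR z by rewrite qS_mul.
have c2 : qS x = qR (qmul y z) by rewrite qR_mul.
apply: eqQ.
  by rewrite (qR_mul _ _ c1) (qR_mul _ _ c2) (qR_mul _ _ e1).
by rewrite (qS_mul _ _ c1) (qS_mul _ _ c2) (qS_mul _ _ e2).
Qed.
Lemma q_mul_rng x : qmul (qrng x) x = x.
Proof. by apply: eqQ; rewrite ?qR_mul ?qS_mul ?qS_rng ?qR_rng. Qed.
Lemma q_mul_src x : qmul x (qsrc x) = x.
Proof. by apply: eqQ; rewrite ?qR_mul ?qS_mul ?qR_src ?qS_src. Qed.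
Lemma q_rng_inv x : qrng (qinv x) = qsrc x.
Proof. by apply: eqQ; rewrite ?qR_rng ?qS_rng ?qR_src ?qS_src ?qR_inv. Qed.
Lemma q_src_inv x : qsrc (qinv x) = qrng x.
Proof. by apply: eqQ; rewrite ?qR_rng ?qS_rng ?qR_src ?qS_src ?qS_inv. Qed.
Lemma q_mulgV x : qmul x (qinv x) = qrng x.
Proof. by apply: eqQ; rewrite ?qR_mul ?qS_mul ?qR_inv ?qS_inv ?qR_rng ?qS_rng. Qed.
Lemma q_mulVg x : qmul (qinv x) x = qsrc x.
Proof. by apply: eqQ; rewrite ?qR_mul ?qS_mul ?qR_inv ?qS_inv ?qR_src ?qS_src. Qed.

Definition QGr : groupoid Q := Groupoid q_rng_unit q_src_unit q_unit_rng
  q_unit_src q_rng_mul q_src_mul q_mulA q_mul_rng q_mul_src q_rng_inv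
  q_src_inv q_mulgV q_mulVg.

Lemma QGr_hom : groupoid_hom Gr QGr rh.
Proof.
split => //.
- move=> g; apply: eqQ => /=.
    by rewrite qR_rng !qR_rho ru.
  by rewrite qS_rng qR_rho qS_rho su.
- move=> g; apply: eqQ => /=.
    by rewrite qR_src qS_rho qR_rho ru'.
  by rewrite qS_src !qS_rho su'.
- move=> g h e; have e' : qS (rh g) = qR (rh h) by rewrite qS_rho qR_rho.
  apply: eqQ => /=.
    by rewrite (qR_mul _ _ e') !qR_rho rng_mul.
  by rewrite (qS_mul _ _ e') !qS_rho src_mul.
- move=> g; apply: eqQ => /=.
    by rewrite qR_inv qS_rho qR_rho rng_inv.
  by rewrite qS_inv qS_rho qR_rho src_inv.
Qed.

Lemma rho_cont : continuous rh.
Proof. exact: pi_continuous. Qed.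

Lemma rho_nbhs (g : G) (A : set G) : open_map rh -> nbhs g A -> nbhs (rh g) (rh @` A).
Proof.
move=> orh nA; apply: (@filterS _ _ _ (rh @` A°)).
  by move=> y [a Aa <-]; exists a => //; exact: interior_subset.
apply: open_nbhs_nbhs; split; first by apply: orh; exact: open_interior.
by exists g => //; exact: nbhs_interior.
Qed.

Lemma q_cont (f : Q -> Q) (F : G -> G) : open_map rh -> continuous F ->
  (forall g, f (rh g) = rh (F g)) -> continuous f.
Proof.
move=> orh cF e x W nW; rewrite -(rho_repr x) in nW *.
rewrite e in nW.
have n1 : nbhs (repr x) (F @^-1` (rh @^-1` W)).
  by apply: cont_nbhs => //; apply: rho_cont.
change (nbhs (rh (repr x)) (f @^-1` W)).
have := rho_nbhs _ _ orh n1.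
apply: filterS => y [a Ha <-] /=.
by rewrite e.
Qed.

Lemma q_lh (f : G -> G) (qf : Q -> Q) : open_map rh -> open U0 ->
  local_homeo_onto U0 f -> (forall g, qf (rh g) = rh (f g)) ->
  local_homeo_onto qunit qf.
Proof.
move=> orh oU0 hf e; have cf := lh_cont _ hf; case: hf => fU lh; split.
  by move=> x; rewrite -(rho_repr x) e; exists (f (repr x)).
move=> x; have [U [oU UX inj cU op]] := lh (repr x).
exists (rh @` U); split.
- exact: orh.
- by exists (repr x) => //; rewrite rho_repr.
- move=> y1 y2; rewrite !inE => -[g1 U1 <-] [g2 U2 <-]; rewrite !e => /rhoE [ee _].
  have e12 : f g1 = f g2 by rewrite -(unit_rng (fU g1)) ee unit_rng.
  by rewrite (inj g1 g2) ?inE.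
- by apply: continuous_subspaceT; apply: (q_cont _ _ orh cf e).
move=> V oV VU.
have oV' : open (U `&` rh @^-1` V) by apply: openI.
have [W [oW eW]] := op _ oV' (fun x => @proj1 _ _).
exists (rh @` (W `&` U0)); split; first by apply: orh; exact: openI.
apply/seteqP; split.
  move=> _ [y Vy <-]; have [g Ug eg] := VU y Vy.
  have : (f @` (U `&` rh @^-1` V)) (f g) by exists g => //; split => //=; rewrite eg.
  rewrite eW => -[Wf Uf]; rewrite -eg e; split; first by exists (f g).
  by exists (f g).
move=> _ [[u [Wu Uu] <-] _].
have : (W `&` U0) u by [].
by rewrite -eW => -[g [Ug Vg] <-]; exists (rh g) => //; rewrite e.
Qed.

Lemma q_mul_cont : open_map rh -> topological_groupoid Gr ->
  {within composable QGr, continuous (fun p : Q * Q => gmul QGr p.1 p.2)}.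
Proof.
move=> orh tg; apply/subspace_continuousP => -[x y] /= cxy W nW.
change (nbhs (x, y) (fun p => composable QGr p -> W (gmul QGr p.1 p.2))).
have c : s (repr x) = r (repr y) by have := qcomp _ _ cxy.
have hxy : gmul QGr x y = rh (mul (repr x) (repr y)).
  by rewrite /= /qmul c eqxx.
have {}nW : nbhs (rh (mul (repr x) (repr y))) W by rewrite -hxy.
have nW' : nbhs (mul (repr x) (repr y)) (rh @^-1` W) by apply: rho_cont.
have oI : open (rh @^-1` W)° by exact: open_interior.
have [P [Q' [nP nQ PQ]]] := mul_near (repr x) (repr y) ((rh @^-1` W)°) tg c oI nW'.
exists (rh @` P, rh @` Q') => /=.
  split; [rewrite -{1}(rho_repr x) | rewrite -{1}(rho_repr y)]; exact: rho_nbhs.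
move=> [_ _] /= [[a Pa <-] [b Qb <-]] /qcomp.
rewrite qS_rho qR_rho => ab.
have := (QGr_hom) => -[_ _ _ hm _]; have := hm a b ab; rewrite /= => <-.
by apply: (@interior_subset _ (rh @^-1` W)); apply: PQ.
Qed.

Lemma QGr_etale : open_map rh -> etale_groupoid Gr -> etale_groupoid QGr.
Proof.
move=> orh [tg [hr hs]]; have oU0 := unit_open hr.
have [_ _ _ _ hinv] := QGr_hom.
have tq : topological_groupoid QGr.
  split; first exact: q_mul_cont.
  apply: (q_cont _ (ginv Gr) orh); first by case: tg.
  by move=> g; rewrite hinv.
split => //; split.
  apply: (q_lh r) => // g /=; rewrite /qrng; apply/rhoE; rewrite rR; split => //.
apply: (q_lh s) => // g /=; rewrite /qsrc; apply/rhoE; rewrite sR; split => //.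
Qed.

End S.

Theorem lemma2p2 (G : topologicalType) (Gr : groupoid G) :
  hausdorff_space G -> locally_compact [set: G] -> @second_countable G ->
  etale_groupoid Gr ->
  [/\ (open (Iso Gr) <-> isotropy_fell_continuous Gr),
      (open (Iso Gr) <-> open (rho Gr @` gunit Gr)),
      (open (Iso Gr) <-> open_map (rho Gr)) &
      (open (Iso Gr) ->
         exists H : groupoid (orbit_space Gr),
           groupoid_hom Gr H (rho Gr) /\ etale_groupoid H)].
Proof.
move=> hG _ _ het; have [tg [hr hs]] := het.
have oU0 := unit_open _ _ hr.
have i2 := iso_open_units _ Gr.
have i3 : open (Iso Gr) <-> open_map (rho Gr).
  split; first exact: iso_open_rho_open.
  by move=> orh; apply/i2; apply: orh.
split => //.
- split; first exact: iso_open_fell.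
  exact: fell_iso_open.
- move=> oI; exists (QGr _ Gr); split; first exact: QGr_hom.
  by apply: QGr_etale => //; apply/i3.
Qed.
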